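(* Let $\mathbb{A}$ be a 2-category and $p:e\to b$ a 1-cell such that $\mathbb{A}$ has the two-dimensional cokernel diagram of $p$. If $p$ has a left adjoint, then a right Kan extension $(t,\gamma)$ of $p$ along $p$ exists and it is preserved by $\delta^0:b\to b\uparrow_pb$. In particular, in the 2-category $\mathbf{Cat}$ of categories, functors and natural transformations (which has the two-dimensional cokernel diagram of every functor), every functor $p$ having a left adjoint has $\mathrm{Ran}_pp$ preserved by $\delta^0$.
   Context: A 2-category is a $\mathbf{Cat}$-enriched category; composition of 1-cells is juxtaposition, vertical composition of 2-cells is $\cdot$, horizontal composition is $\ast$, $\mathrm{id}_f$ is the identity 2-cell on $f$. An adjunction $l\dashv p$ in $\mathbb{A}$ is given by 1-cells $l:b\to e$, $p:e\to b$ and 2-cells $\varepsilon:lp\Rightarrow\mathrm{id}_e$, $\eta:\mathrm{id}_b\Rightarrow pl$ satisfying the triangle identities. Opcomma object of $p$ along itself: an object $b\uparrow_p b$ with 1-cells $\delta^0,\delta^1:b\to b\uparrow_p b$ and a 2-cell $\alpha:\delta^1p\Rightarrow\delta^0p$ such that for every object $y$ the functor $h\mapsto(h\delta^0,h\delta^1,\mathrm{id}_h\ast\alpha)$, $\xi\mapsto(\xi\ast\mathrm{id}_{\delta^0},\xi\ast\mathrm{id}_{\delta^1})$ is an isomorphism from $\mathbb{A}(b\uparrow_p b,y)$ onto the category of triples $(h_0,h_1:b\to y,\ \beta:h_1p\Rightarrow h_0p)$ with morphisms pairs of 2-cells $(\xi_0:h_0\Rightarrow h_0',\xi_1:h_1\Rightarrow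 h_1')$ satisfying $(\xi_0\ast\mathrm{id}_p)\cdot\beta=\beta'\cdot(\xi_1\ast\mathrm{id}_p)$. Two-dimensional pushout of a span $f_0:c\to c_0$, $f_1:c\to c_1$: an object $P$ with $q_0:c_0\to P$, $q_1:c_1\to P$, $q_0f_0=q_1f_1$, such that for every $y$, $k\mapsto(kq_0,kq_1)$ is an isomorphism from $\mathbb{A}(P,y)$ onto the category of pairs $(k_0,k_1)$ with $k_0f_0=k_1f_1$, whose morphisms are pairs of 2-cells $(\xi_0,\xi_1)$ with $\xi_0\ast\mathrm{id}_{f_0}=\xi_1\ast\mathrm{id}_{f_1}$. $\mathbb{A}$ has the two-dimensional cokernel diagram of $p$ if it has an opcomma object $b\uparrow_p b$ of $p$ along itself and a two-dimensional pushout $b\uparrow_pb\uparrow_pb$ of the span $(\delta^0,\delta^1)$, with 1-cells $D^0,D^2$ satisfying $D^2\delta^0=D^0\delta^1$. Right Kan extension of $f:z\to y$ along $g:z\to x$: a pair $(r:x\to y,\gamma:rg\Rightarrow f)$ such that for each $k:x\to y$, $\beta\mapsto\gamma\cdot(\beta\ast\mathrm{id}_g)$ is a bijection from 2-cells $k\Rightarrow r$ to 2-cells $kg\Rightarrow f$. A 1-cell $d:y\to y'$ preserves it if $(dr,\mathrm{id}_d\ast\gamma)$ is a right Kan extension of $df$ along $g$. *)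

(* Defs.v *)
Set Implicit Arguments.
Unset Strict Implicit.

Definition cast2 {X : Type} {C : X -> X -> Type} {f f' g g' : X}
  (e1 : f = f') (e2 : g = g') (x : C f g) : C f' g' :=
  match e1 in _ = f1, e2 in _ = g1 return C f1 g1 with
  | eq_refl, eq_refl => x end.

(* A 2-category = Cat-enriched category.  comp1 g f is the juxtaposition g f
   (first f, then g); vcomp β α is β · α (first α); hcomp β α is β ∗ α. *)
Record TwoCat := {
  Obj : Type;
  Hom : Obj -> Obj -> Type;
  Cell : forall a b : Obj, Hom a b -> Hom a b -> Type;
  id1 : forall a : Obj, Hom a a;
  comp1 : forall a b c : Obj, Hom b c -> Hom a b -> Hom a c;
  id2 : forall (a b : Obj) (f : Hom a b), Cell f f;
  vcomp : forall (a b : Obj) (f g h : Hom a b), Cell g h -> Cell f g -> Cell f h;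
  hcomp : forall (a b c : Obj) (g g' : Hom b c) (f f' : Hom a b),
      Cell g g' -> Cell f f' -> Cell (comp1 g f) (comp1 g' f');
  comp1A : forall (a b c d : Obj) (h : Hom c d) (g : Hom b c) (f : Hom a b),
      comp1 h (comp1 g f) = comp1 (comp1 h g) f;
  comp1_id_l : forall (a b : Obj) (f : Hom a b), comp1 (id1 b) f = f;
  comp1_id_r : forall (a b : Obj) (f : Hom a b), comp1 f (id1 a) = f;
  vcompA : forall (a b : Obj) (f g h k : Hom a b)
      (γ : Cell h k) (β : Cell g h) (α : Cell f g),
      vcomp γ (vcomp β α) = vcomp (vcomp γ β) α;
  vcomp_id_l : forall (a b : Obj) (f g : Hom a b) (α : Cell f g), vcomp (id2 g) α = α;
  vcomp_id_r : forall (a b : Obj) (f g : Hom a b) (α : Cell f g), vcomp α (id2 f) = α;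
  hcomp_id : forall (a b c : Obj) (g : Hom b c) (f : Hom a b),
      hcomp (id2 g) (id2 f) = id2 (comp1 g f);
  interchange : forall (a b c : Obj) (g g' g'' : Hom b c) (f f' f'' : Hom a b)
      (β' : Cell g' g'') (β : Cell g g') (α' : Cell f' f'') (α : Cell f f'),
      hcomp (vcomp β' β) (vcomp α' α) = vcomp (hcomp β' α') (hcomp β α);
  hcompA : forall (a b c d : Obj) (h h' : Hom c d) (g g' : Hom b c) (f f' : Hom a b)
      (γ : Cell h h') (β : Cell g g') (α : Cell f f'),
      cast2 (comp1A h g f) (comp1A h' g' f') (hcomp γ (hcomp β α))
      = hcomp (hcomp γ β) α;
  hcomp_id1_l : forall (a b : Obj) (f f' : Hom a b) (α : Cell f f'),
      cast2 (comp1_id_l f) (comp1_id_l f') (hcomp (id2 (id1 b)) α) = α;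
  hcomp_id1_r : forall (a b : Obj) (f f' : Hom a b) (α : Cell f f'),
      cast2 (comp1_id_r f) (comp1_id_r f') (hcomp α (id2 (id1 a))) = α
}.

Arguments Hom {A} a b : rename.
Arguments Cell {A a b} f g : rename.
Arguments id1 {A} a : rename.
Arguments comp1 {A a b c} g f : rename.
Arguments id2 {A a b} f : rename.
Arguments vcomp {A a b f g h} β α : rename.
Arguments hcomp {A a b c g g' f f'} β α : rename.
Arguments comp1A {A a b c d} h g f : rename.
Arguments comp1_id_l {A a b} f : rename.
Arguments comp1_id_r {A a b} f : rename.

Unset Implicit Arguments.
Section Notions.
Context {A : TwoCat}.

Definition castC {a b : Obj A} {f f' g g' : Hom a b} (e1 : f = f') (e2 : g = g')
  (x : Cell f g) : Cell f' g' := @cast2 _ (@Cell A a b) _ _ _ _ e1 e2 x.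

(* p has a left adjoint: l ⊣ p with l : b -> e, ε : l p ⇒ id_e, η : id_b ⇒ p l,
   satisfying the triangle identities (ε∗id_l)·(id_l∗η) = id_l and
   (id_p∗ε)·(η∗id_p) = id_p (associativity/unit isos are identities, written
   as transports). *)
Definition is_adjunction {e b : Obj A} (l : Hom b e) (p : Hom e b)
  (ε : Cell (comp1 l p) (id1 e)) (η : Cell (id1 b) (comp1 p l)) : Prop :=
  vcomp (castC eq_refl (comp1_id_l l) (hcomp ε (id2 l)))
        (castC (comp1_id_r l) (comp1A l p l) (hcomp (id2 l) η)) = id2 l
  /\
  vcomp (castC (comp1A p l p) (comp1_id_r p) (hcomp (id2 p) ε))
        (castC (comp1_id_l p) eq_refl (hcomp η (id2 p))) = id2 p.

Definition has_left_adjoint {e b : Obj A} (p : Hom e b) : Prop :=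
  exists (l : Hom b e) (ε : Cell (comp1 l p) (id1 e)) (η : Cell (id1 b) (comp1 p l)),
    is_adjunction l p ε η.

(* Opcomma object (B, δ0, δ1, α) of p along itself, α : δ1 p ⇒ δ0 p.
   For every y, the functor h ↦ (hδ0, hδ1, id_h ∗ α),  ξ ↦ (ξ∗id_δ0, ξ∗id_δ1)
   is an isomorphism of categories: bijective on objects and bijective on
   each hom-set (onto the morphisms of triples). *)
Definition opcomma_triple {e b : Obj A} (p : Hom e b) (y : Obj A) : Type :=
  { h0 : Hom b y & { h1 : Hom b y & Cell (comp1 h1 p) (comp1 h0 p) } }.

Definition opcomma_ob {e b : Obj A} (p : Hom e b) {B : Obj A} (d0 d1 : Hom b B)
  (α : Cell (comp1 d1 p) (comp1 d0 p)) {y : Obj A} (h : Hom B y) : opcomma_triple p y :=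
  existT _ (comp1 h d0) (existT _ (comp1 h d1)
    (castC (comp1A h d1 p) (comp1A h d0 p) (hcomp (id2 h) α))).

Definition is_opcomma {e b : Obj A} (p : Hom e b) (B : Obj A) (d0 d1 : Hom b B)
  (α : Cell (comp1 d1 p) (comp1 d0 p)) : Prop :=
  forall y : Obj A,
    (forall T : opcomma_triple p y, exists! h : Hom B y, opcomma_ob p d0 d1 α h = T)
    /\
    (forall (h h' : Hom B y)
       (ξ0 : Cell (comp1 h d0) (comp1 h' d0)) (ξ1 : Cell (comp1 h d1) (comp1 h' d1)),
       vcomp (hcomp ξ0 (id2 p)) (castC (comp1A h d1 p) (comp1A h d0 p) (hcomp (id2 h) α))
       = vcomp (castC (comp1A h' d1 p) (comp1A h' d0 p) (hcomp (id2 h') α)) (hcomp ξ1 (id2 p))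
       -> exists! ξ : Cell h h', hcomp ξ (id2 d0) = ξ0 /\ hcomp ξ (id2 d1) = ξ1).

Definition pushout_pair {c c0 c1 : Obj A} (f0 : Hom c c0) (f1 : Hom c c1) (y : Obj A)
  : Type := { k0 : Hom c0 y & { k1 : Hom c1 y | comp1 k0 f0 = comp1 k1 f1 } }.

Definition pushout_eq {c c0 c1 P y : Obj A} {f0 : Hom c c0} {f1 : Hom c c1}
  {q0 : Hom c0 P} {q1 : Hom c1 P} (Hq : comp1 q0 f0 = comp1 q1 f1) (k : Hom P y)
  : comp1 (comp1 k q0) f0 = comp1 (comp1 k q1) f1 :=
  eq_trans (eq_sym (comp1A k q0 f0)) (eq_trans (f_equal (comp1 k) Hq) (comp1A k q1 f1)).

Definition pushout_ob {c c0 c1 P y : Obj A} (f0 : Hom c c0) (f1 : Hom c c1)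
  (q0 : Hom c0 P) (q1 : Hom c1 P) (Hq : comp1 q0 f0 = comp1 q1 f1) (k : Hom P y)
  : pushout_pair f0 f1 y :=
  existT _ (comp1 k q0) (exist _ (comp1 k q1) (pushout_eq Hq k)).

Definition is_2pushout {c c0 c1 : Obj A} (f0 : Hom c c0) (f1 : Hom c c1)
  (P : Obj A) (q0 : Hom c0 P) (q1 : Hom c1 P) (Hq : comp1 q0 f0 = comp1 q1 f1) : Prop :=
  forall y : Obj A,
    (forall K : pushout_pair f0 f1 y, exists! k : Hom P y, pushout_ob f0 f1 q0 q1 Hq k = K)
    /\
    (forall (k k' : Hom P y)
       (ξ0 : Cell (comp1 k q0) (comp1 k' q0)) (ξ1 : Cell (comp1 k q1) (comp1 k' q1)),
       castC (pushout_eq Hq k) (pushout_eq Hq k') (hcomp ξ0 (id2 f0)) = hcomp ξ1 (id2 f1)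
       -> exists! ξ : Cell k k', hcomp ξ (id2 q0) = ξ0 /\ hcomp ξ (id2 q1) = ξ1).

(* The two-dimensional cokernel diagram of p: an opcomma object b↑_p b of p
   along itself together with a 2-dimensional pushout b↑_p b↑_p b of the span
   (δ0, δ1), with legs D2, D0 satisfying D2 δ0 = D0 δ1. *)
Definition is_2cokernel_diagram {e b : Obj A} (p : Hom e b)
  (B : Obj A) (d0 d1 : Hom b B) (α : Cell (comp1 d1 p) (comp1 d0 p))
  (P : Obj A) (D2 D0 : Hom B P) (HD : comp1 D2 d0 = comp1 D0 d1) : Prop :=
  is_opcomma p B d0 d1 α /\ is_2pushout d0 d1 P D2 D0 HD.

Definition is_right_kan {x y z : Obj A} (f : Hom z y) (g : Hom z x)
  (r : Hom x y) (γ : Cell (comp1 r g) f) : Prop :=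
  forall (k : Hom x y) (θ : Cell (comp1 k g) f),
    exists! β : Cell k r, vcomp γ (hcomp β (id2 g)) = θ.

Definition preserves_right_kan {x y z y' : Obj A} (f : Hom z y) (g : Hom z x)
  (r : Hom x y) (γ : Cell (comp1 r g) f) (d : Hom y y') : Prop :=
  is_right_kan (comp1 d f) g (comp1 d r)
    (castC (comp1A d r g) eq_refl (hcomp (id2 d) γ)).

End Notions.

(* Main.v *)
Require Import Defs.
From Stdlib Require Import ClassicalEpsilon Eqdep.

Section Packed.
Context {A : TwoCat}.

Definition PC (a b : Obj A) := {f : Hom a b & {g : Hom a b & Cell f g}}.
Definition pk {a b : Obj A} {f g : Hom a b} (x : Cell f g) : PC a b :=
  existT _ f (existT _ g x).
Definition src {a b : Obj A} (X : PC a b) : Hom a b := projT1 X.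
Definition tgt {a b : Obj A} (X : PC a b) : Hom a b := projT1 (projT2 X).
Definition cell {a b : Obj A} (X : PC a b) : Cell (src X) (tgt X) := projT2 (projT2 X).
Definition ph {a b c : Obj A} (Y : PC b c) (X : PC a b) : PC a c :=
  pk (hcomp (cell Y) (cell X)).
Definition I {a b : Obj A} (f : Hom a b) : PC a b := pk (id2 f).
Definition pv {a b : Obj A} (Y X : PC a b) : PC a b :=
  match excluded_middle_informative (tgt X = src Y) with
  | left e => pk (vcomp (cell Y) (castC eq_refl e (cell X)))
  | right _ => X
  end.

Lemma pk_cast {a b : Obj A} {f f' g g' : Hom a b} (e1 : f = f') (e2 : g = g') (x : Cell f g) :
  pk (castC e1 e2 x) = pk x.
Proof. destruct e1, e2; reflexivity. Qed.

Lemma pk_inj {a b : Obj A} {f g : Hom a b} (x y : Cell f g) : pk x = pk y -> x = y.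
Proof. unfold pk; intro H; apply inj_pair2 in H; apply inj_pair2 in H; exact H. Qed.

Lemma pv_pk {a b : Obj A} {f g h : Hom a b} (y : Cell g h) (x : Cell f g) :
  pv (pk y) (pk x) = pk (vcomp y x).
Proof.
  unfold pv; destruct (excluded_middle_informative _) as [e|n].
  - change (g = g) in e. rewrite (UIP_refl _ _ e). reflexivity.
  - exfalso; apply n; reflexivity.
Qed.

Ltac dpk X := let f := fresh "f" in let g := fresh "g" in let x := fresh "x" in
  destruct X as [f [g x]]; change (existT _ f (existT _ g x)) with (pk x) in *.

Ltac red_pk := repeat match goal with
  | |- context [cell (@pk ?a ?b ?f ?g ?x)] => change (cell (@pk a b f g x)) with x
  | |- context [src (@pk ?a ?b ?f ?g ?x)] => change (src (@pk a b f g x)) with f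
  | |- context [tgt (@pk ?a ?b ?f ?g ?x)] => change (tgt (@pk a b f g x)) with g
  end.

Lemma pv_assoc {a b : Obj A} (Z Y X : PC a b) :
  tgt X = src Y -> tgt Y = src Z -> pv Z (pv Y X) = pv (pv Z Y) X.
Proof.
  dpk X; dpk Y; dpk Z; simpl; intros E1 E2; subst.
  rewrite !pv_pk, vcompA; reflexivity.
Qed.

Lemma pv_id_l {a b : Obj A} (f : Hom a b) (X : PC a b) : f = tgt X -> pv (I f) X = X.
Proof. dpk X; simpl; intros; subst; unfold I; rewrite pv_pk, vcomp_id_l; reflexivity. Qed.

Lemma pv_id_r {a b : Obj A} (f : Hom a b) (X : PC a b) : f = src X -> pv X (I f) = X.
Proof. dpk X; simpl; intros; subst; unfold I; rewrite pv_pk, vcomp_id_r; reflexivity. Qed.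

Lemma ph_assoc {a b c d : Obj A} (Z : PC c d) (Y : PC b c) (X : PC a b) :
  ph Z (ph Y X) = ph (ph Z Y) X.
Proof.
  dpk X; dpk Y; dpk Z; unfold ph; simpl.
  red_pk. rewrite <- hcompA. symmetry. apply (pk_cast (comp1A _ _ _) (comp1A _ _ _)).
Qed.

Lemma ph_id_l {a b : Obj A} (X : PC a b) : ph (I (id1 b)) X = X.
Proof.
  dpk X; unfold ph, I; red_pk.
  rewrite <- (hcomp_id1_l x) at 2. symmetry. apply (pk_cast (comp1_id_l _) (comp1_id_l _)).
Qed.

Lemma ph_id_r {a b : Obj A} (X : PC a b) : ph X (I (id1 a)) = X.
Proof.
  dpk X; unfold ph, I; red_pk.
  rewrite <- (hcomp_id1_r x) at 2. symmetry. apply (pk_cast (comp1_id_r _) (comp1_id_r _)).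
Qed.

Lemma ph_I {a b c : Obj A} (g : Hom b c) (f : Hom a b) : ph (I g) (I f) = I (comp1 g f).
Proof. unfold ph, I; simpl; rewrite hcomp_id; reflexivity. Qed.

Lemma wr_pv {a b c : Obj A} (Y X : PC b c) (f : Hom a b) :
  tgt X = src Y -> ph (pv Y X) (I f) = pv (ph Y (I f)) (ph X (I f)).
Proof.
  dpk X; dpk Y; simpl; intros; subst. unfold ph, I; red_pk. rewrite pv_pk. red_pk.
  rewrite pv_pk, <- interchange, vcomp_id_l; reflexivity.
Qed.

Lemma wl_pv {a b c : Obj A} (g : Hom b c) (Y X : PC a b) :
  tgt X = src Y -> ph (I g) (pv Y X) = pv (ph (I g) Y) (ph (I g) X).
Proof.
  dpk X; dpk Y; simpl; intros; subst. unfold ph, I; red_pk. rewrite pv_pk. red_pk.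
  rewrite pv_pk, <- interchange, vcomp_id_l; reflexivity.
Qed.

Lemma exch1 {a b c : Obj A} (Y : PC b c) (X : PC a b) g f :
  g = tgt Y -> f = src X -> pv (ph (I g) X) (ph Y (I f)) = ph Y X.
Proof.
  dpk X; dpk Y; simpl; intros; subst. unfold ph, I; red_pk.
  rewrite pv_pk, <- interchange, vcomp_id_l, vcomp_id_r; reflexivity.
Qed.

Lemma exch2 {a b c : Obj A} (Y : PC b c) (X : PC a b) g f :
  g = tgt X -> f = src Y -> pv (ph Y (I g)) (ph (I f) X) = ph Y X.
Proof.
  dpk X; dpk Y; simpl; intros; subst. unfold ph, I; red_pk.
  rewrite pv_pk, <- interchange, vcomp_id_l, vcomp_id_r; reflexivity.
Qed.


Ltac cond := cbn [src tgt ph I pk cell projT1 projT2];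
  rewrite ?comp1_id_l, ?comp1_id_r, ?comp1A; reflexivity.

Lemma kan_main {e b y : Obj A} (p : Hom e b) (l : Hom b e)
  (ε : Cell (comp1 l p) (id1 e)) (η : Cell (id1 b) (comp1 p l))
  (T1 : pv (ph (pk ε) (I l)) (ph (I l) (pk η)) = I l)
  (T2 : pv (ph (I p) (pk ε)) (ph (pk η) (I p)) = I p)
  (h : Hom e y) :
  is_right_kan h p (comp1 h l) (castC (comp1A h l p) (comp1_id_r h) (hcomp (id2 h) ε)).
Proof.
  intros k θ.
  set (Ψ := castC (comp1_id_r k) eq_refl
     (vcomp (hcomp θ (id2 l)) (castC eq_refl (comp1A k p l) (hcomp (id2 k) η)))
     : Cell k (comp1 h l)).
  assert (KΨ : pk Ψ = pv (ph (pk θ) (I l)) (ph (I k) (pk η))).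
  { unfold Ψ. rewrite pk_cast, <- pv_pk, pk_cast. reflexivity. }
  exists Ψ; split.
  - apply pk_inj. rewrite <- pv_pk, pk_cast.
    change (pk (hcomp Ψ (id2 p))) with (ph (pk Ψ) (I p)).
    change (pk (hcomp (id2 h) ε)) with (ph (I h) (pk ε)).
    rewrite KΨ.
    rewrite wr_pv by cond.
    rewrite <- !ph_assoc, ph_I.
    rewrite pv_assoc by cond.
    rewrite exch1 by cond.
    rewrite <- (exch2 (pk θ) (pk ε) (id1 e) (comp1 k p)) by cond.
    rewrite ph_id_r.
    rewrite <- pv_assoc by cond.
    rewrite <- (ph_I k p), <- ph_assoc.
    rewrite <- wl_pv by cond.
    rewrite T2, ph_I, pv_id_r by cond. reflexivity.
  - intros β Hβ. apply pk_inj. rewrite KΨ, <- Hβ.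
    rewrite <- pv_pk, pk_cast.
    change (pk (hcomp β (id2 p))) with (ph (pk β) (I p)).
    change (pk (hcomp (id2 h) ε)) with (ph (I h) (pk ε)).
    rewrite wr_pv by cond.
    rewrite <- !ph_assoc, ph_I.
    rewrite <- pv_assoc by cond.
    rewrite exch2 by cond.
    rewrite <- (exch1 (pk β) (pk η) (comp1 h l) (id1 b)) by cond.
    rewrite ph_id_r.
    rewrite pv_assoc by cond.
    rewrite <- (ph_I h l), <- ph_assoc.
    rewrite <- wl_pv by cond.
    rewrite T1, ph_I, pv_id_l by cond. reflexivity.
Qed.

Lemma kan_transfer {x y z : Obj A} (f : Hom z y) (g : Hom z x) (r r' : Hom x y)
  (γ : Cell (comp1 r g) f) (γ' : Cell (comp1 r' g) f) :
  is_right_kan f g r γ -> r = r' -> pk γ = pk γ' -> is_right_kan f g r' γ'.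
Proof. intros H E1 E2; subst r'. apply pk_inj in E2; subst γ'; exact H. Qed.

End Packed.

Theorem proposition4p3 (A : TwoCat) (e b : Obj A) (p : Hom e b)
  (B : Obj A) (d0 d1 : Hom b B) (α : Cell (comp1 d1 p) (comp1 d0 p))
  (P : Obj A) (D2 D0 : Hom B P) (HD : comp1 D2 d0 = comp1 D0 d1) :
  is_2cokernel_diagram p B d0 d1 α P D2 D0 HD ->
  has_left_adjoint p ->
  exists (t : Hom b b) (γ : Cell (comp1 t p) p),
    is_right_kan p p t γ /\ preserves_right_kan p p t γ d0.
Proof.
  intros _ [l [ε [η [H1 H2]]]].
  assert (T1 : pv (ph (pk ε) (I l)) (ph (I l) (pk η)) = I l).
  { unfold I at 3. rewrite <- H1, <- pv_pk, !pk_cast. reflexivity. }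
  assert (T2 : pv (ph (I p) (pk ε)) (ph (pk η) (I p)) = I p).
  { unfold I at 3. rewrite <- H2, <- pv_pk, !pk_cast. reflexivity. }
  exists (comp1 p l), (castC (comp1A p l p) (comp1_id_r p) (hcomp (id2 p) ε)).
  split.
  - exact (kan_main p l ε η T1 T2 p).
  - unfold preserves_right_kan.
    apply (kan_transfer _ _ _ _ _ _ (kan_main p l ε η T1 T2 (comp1 d0 p))).
    + symmetry; apply comp1A.
    + rewrite !pk_cast.
      change (pk (hcomp (id2 (comp1 d0 p)) ε)) with (ph (I (comp1 d0 p)) (pk ε)).
      change (pk (hcomp (id2 d0) (castC (comp1A p l p) (comp1_id_r p) (hcomp (id2 p) ε))))
        with (ph (I d0) (pk (castC (comp1A p l p) (comp1_id_r p) (hcomp (id2 p) ε)))).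
      rewrite pk_cast.
      change (pk (hcomp (id2 p) ε)) with (ph (I p) (pk ε)).
      rewrite ph_assoc, ph_I. reflexivity.
Qed.
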